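(* (1) A field $F$ is $n$-torsion clean if and only if $F$ is finite and $n=|F|-1$. (2) A finite product of finite fields $\mathbb{F}_{p_1^{k_1}}\times\cdots\times\mathbb{F}_{p_t^{k_t}}$ is $n$-torsion clean, where $n=\mathrm{LCM}(p_1^{k_1}-1,\ldots,p_t^{k_t}-1)$. (3) A product $\prod_{i\in I}F_i$ of fields is $n$-torsion clean if and only if all fields $F_i$, $i\in I$, are finite and $\mathrm{LCM}(|F_i|-1\mid i\in I)$ exists and equals $n$. (4) Let $R$ be a subdirect product of fields $F_i$, $i\in I$. Then $R$ is $n$-torsion clean if and only if $\prod_{i\in I}F_i$ is $n$-torsion clean.
   Context: All rings are associative with identity; $\mathbb{F}_m$ denotes the field with $m$ elements. A ring $R$ is $n$-torsion clean if every $r\in R$ can be written $r=e+u$ with $e^2=e$, $u$ a unit, $u^n=1$, and $n$ is the smallest natural number with this property. $\mathrm{LCM}(|F_i|-1\mid i\in I)$ exists means the set $\{|F_i|-1\mid i\in I\}$ has a least common multiple in $\mathbb{N}$. *)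

(* Defs.v *)
From HB Require Import structures.
From mathcomp Require Import all_boot all_algebra.
From mathcomp Require Import boolp.

Set Implicit Arguments.
Unset Strict Implicit.
Unset Printing Implicit Defensive.
Import GRing.Theory.
Local Open Scope ring_scope.

Definition dprod (I : Type) (F : I -> pzRingType) : Type := forall i, F i.

Section DProd.
Variables (I : Type) (F : I -> pzRingType).
Local Notation P := (dprod F).

HB.instance Definition _ := gen_eqMixin P.
HB.instance Definition _ := gen_choiceMixin P.

Definition dprod_zero : P := fun i => 0.
Definition dprod_opp (x : P) : P := fun i => - x i.
Definition dprod_add (x y : P) : P := fun i => x i + y i.
Definition dprod_one : P := fun i => 1.
Definition dprod_mul (x y : P) : P := fun i => x i * y i.

Lemma dprod_addA : associative dprod_add.
Proof. by move=> x y z; apply: functional_extensionality_dep => i; rewrite /dprod_add addrA. Qed.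
Lemma dprod_addC : commutative dprod_add.
Proof. by move=> x y; apply: functional_extensionality_dep => i; rewrite /dprod_add addrC. Qed.
Lemma dprod_add0 : left_id dprod_zero dprod_add.
Proof. by move=> x; apply: functional_extensionality_dep => i; rewrite /dprod_add add0r. Qed.
Lemma dprod_addN : left_inverse dprod_zero dprod_opp dprod_add.
Proof. by move=> x; apply: functional_extensionality_dep => i; rewrite /dprod_add /dprod_opp addNr. Qed.

HB.instance Definition _ :=
  GRing.isZmodule.Build P dprod_addA dprod_addC dprod_add0 dprod_addN.

Lemma dprod_mulA : associative dprod_mul.
Proof. by move=> x y z; apply: functional_extensionality_dep => i; rewrite /dprod_mul mulrA. Qed.
Lemma dprod_mul1 : left_id dprod_one dprod_mul.
Proof. by move=> x; apply: functional_extensionality_dep => i; rewrite /dprod_mul mul1r. Qed.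
Lemma dprod_mulr1 : right_id dprod_one dprod_mul.
Proof. by move=> x; apply: functional_extensionality_dep => i; rewrite /dprod_mul mulr1. Qed.
Lemma dprod_mulDl : left_distributive dprod_mul +%R.
Proof. by move=> x y z; apply: functional_extensionality_dep => i; rewrite /dprod_mul /= /dprod_add mulrDl. Qed.
Lemma dprod_mulDr : right_distributive dprod_mul +%R.
Proof. by move=> x y z; apply: functional_extensionality_dep => i; rewrite /dprod_mul /= /dprod_add mulrDr. Qed.

HB.instance Definition _ := GRing.Zmodule_isPzRing.Build P
  dprod_mulA dprod_mul1 dprod_mulr1 dprod_mulDl dprod_mulDr.

End DProd.

Definition dproj (I : Type) (F : I -> pzRingType) (i : I) (x : dprod F) : F i := x i.

Definition is_unit_of (R : pzRingType) (u : R) : Prop :=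
  exists v : R, u * v = 1 /\ v * u = 1.

Definition torsion_clean_exp (R : pzRingType) (n : nat) : Prop :=
  forall r : R, exists (e u : R),
    e * e = e /\ is_unit_of u /\ u ^+ n = 1 /\ r = e + u.

Definition n_torsion_clean (R : pzRingType) (n : nat) : Prop :=
  (0 < n)%N /\ torsion_clean_exp R n /\
  forall m : nat, (0 < m)%N -> torsion_clean_exp R m -> (n <= m)%N.

Definition has_card (T : eqType) (k : nat) : Prop :=
  exists s : seq T, uniq s /\ (forall x : T, x \in s) /\ size s = k.

Definition is_finite_type (T : eqType) : Prop := exists k, has_card T k.

Definition lcm_of_set_is (S : nat -> Prop) (n : nat) : Prop :=
  (0 < n)%N /\ (forall m, S m -> (m %| n)%N) /\
  (forall k, (0 < k)%N -> (forall m, S m -> (m %| k)%N) -> (n <= k)%N).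

(* Main.v *)
Require Import Defs.
From HB Require Import structures.
From mathcomp Require Import all_boot all_algebra all_field.
From mathcomp Require Import boolp.
From Stdlib Require Classical.
From mathcomp Require Import zify.
Set Implicit Arguments.
Unset Strict Implicit.
Unset Printing Implicit Defensive.
Import GRing.Theory.
Local Open Scope ring_scope.

Section Fermat.
Variables (F : fieldType) (s : seq F) (us : uniq s) (fs : forall x, x \in s).
Let hs : Finite.axiom s := Finite.uniq_enumP us (fun x => fs x).
Definition FF : Type := F.
HB.instance Definition _ := GRing.Field.on FF.
HB.instance Definition _ := isCountable.Build FF (@fin_pickleK F s hs).
HB.instance Definition _ := isFinite.Build FF hs.
Lemma fermat_seq (x : F) : x != 0 -> x ^+ (size s).-1 = 1.
Proof.
move=> x0.
have cs : #|(FF : finType)| = size s.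
  rewrite cardE; apply: perm_size; apply: uniq_perm => //; first exact: enum_uniq.
  by move=> y; rewrite mem_enum fs.
have := @expf_card FF x; rewrite cs.
case: (size s) => [|k] /=; first by rewrite expr0.
rewrite exprS => h; apply: (mulfI x0); rewrite mulr1; exact: h.
Qed.
End Fermat.

Lemma fermat (F : fieldType) q (x : F) : has_card F q -> x != 0 -> x ^+ q.-1 = 1.
Proof. by case=> s [us [fs <-]]; apply: fermat_seq. Qed.

Lemma card_uniq (T : eqType) k k' : has_card T k -> has_card T k' -> k = k'.
Proof.
case=> s [us [fs <-]] [s' [us' [fs' <-]]]; apply: perm_size; apply: uniq_perm => //.
by move=> x; rewrite fs fs'.
Qed.

Lemma card_ge2 (F : fieldType) q : has_card F q -> (2 <= q)%N.
Proof.
case=> s [us [fs <-]]; apply: (@uniq_leq_size _ [:: 0; 1]) => //=.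
by rewrite inE eq_sym oner_eq0.
Qed.

Lemma idem01 (F : fieldType) (e : F) : e * e = e -> e = 0 \/ e = 1.
Proof.
move=> h; have : e * (e - 1) == 0 by rewrite mulrBr mulr1 h subrr.
by rewrite mulf_eq0 subr_eq0 => /orP [] /eqP; auto.
Qed.

Lemma unit_nz (F : fieldType) (u : F) : is_unit_of u -> u != 0.
Proof.
case=> v [h _]; apply/eqP => u0; move: h; rewrite u0 mul0r => /eqP.
by rewrite eq_sym oner_eq0.
Qed.

Lemma tce_roots (F : fieldType) m : torsion_clean_exp F m ->
  forall x : F, (x != 0 /\ x ^+ m = 1) \/ (x - 1 != 0 /\ (x - 1) ^+ m = 1).
Proof.
move=> H x; have [e [u [he [hu [hm ->]]]]] := H x.
have nz := unit_nz hu.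
case: (idem01 he) => ->; [left | right]; rewrite ?add0r ?(addrC 1) ?addrK //.
Qed.

Lemma count2 (F : fieldType) d (L : seq F) : (0 < d)%N -> uniq L ->
  (forall x, x \in L -> x ^+ d = 1 \/ (x - 1) ^+ d = 1) -> (size L <= 2 * d)%N.
Proof.
move=> d0 uL H.
pose a := fun x : F => x ^+ d == 1.
pose b := fun x : F => (x - 1) ^+ d == 1.
have hall : all (predU a b) L.
  by apply/allP => x /H [] h; rewrite /= /a /b h eqxx ?orbT.
move: hall; rewrite all_count => /eqP <-.
have := count_predUI a b L.
have ha : (count a L <= d)%N.
  rewrite -size_filter; apply: max_unity_roots => //; last exact: filter_uniq.
  by apply/allP => x; rewrite mem_filter unity_rootE => /andP [].
have hb : (count b L <= d)%N.
  rewrite -size_filter -(size_map (fun x => x - 1)).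
  apply: max_unity_roots => //.
    apply/allP => y /mapP [x]; rewrite mem_filter unity_rootE => /andP [hx _] ->.
    exact: hx.
  rewrite map_inj_uniq; first exact: filter_uniq.
  exact: addIr.
move=> e; rewrite mul2n -addnn; apply: leq_trans (leq_add ha hb).
by rewrite -e leq_addr.
Qed.

Lemma not_finite_big (T : eqType) : ~ is_finite_type T ->
  forall k, exists L : seq T, uniq L /\ size L = k.
Proof.
move=> nf; elim=> [|k [L [uL sL]]]; first by exists [::].
have : ~ forall x, x \in L by move=> h; apply: nf; exists (size L), L.
move=> /Classical_Pred_Type.not_all_ex_not [x xL].
exists (x :: L); split; last by rewrite /= sL.
by rewrite /= uL andbT; apply/negP.
Qed.

Lemma tce_finite (F : fieldType) m : (0 < m)%N -> torsion_clean_exp F m ->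
  is_finite_type F.
Proof.
move=> m0 H; apply: Classical_Prop.NNPP => nf.
have [L [uL sL]] := not_finite_big nf (2 * m).+1.
suff : (size L <= 2 * m)%N by rewrite sL ltnn.
apply: count2 => // x _; case: (tce_roots H x) => [[_ h]|[_ h]]; auto.
Qed.

Lemma pow_gcd (F : fieldType) m N (u : F) : (0 < m)%N -> u ^+ m = 1 -> u ^+ N = 1 ->
  u ^+ (gcdn m N) = 1.
Proof.
move=> m0 hm hN; have [a _ ha] := Bezoutl N m0.
have e := divnK ha.
have : u ^+ (gcdn m N + a * N) = u ^+ ((gcdn m N + a * N) %/ m * m) by rewrite e.
rewrite exprD mulnC exprM hN expr1n mulr1 => ->.
by rewrite mulnC exprM hm expr1n.
Qed.

Lemma tce_dvd (F : fieldType) m q : (0 < m)%N -> torsion_clean_exp F m ->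
  has_card F q -> (q.-1 %| m)%N.
Proof.
move=> m0 H hq; have q2 := card_ge2 hq.
set N := q.-1; set d := gcdn m N.
have d0 : (0 < d)%N by rewrite gcdn_gt0 m0.
have hx : forall x : F, x ^+ d = 1 \/ (x - 1) ^+ d = 1.
  move=> x; case: (tce_roots H x) => [[nz h]|[nz h]]; [left|right];
    apply: pow_gcd => //; exact: fermat.
have := hq; case=> s [us [fs ss]].
have := count2 d0 us (fun x _ => hx x); rewrite ss => hle.
have : (d %| N)%N by apply: dvdn_gcdr.
case/dvdnP => k hk.
have N0 : (0 < N)%N by rewrite /N; case: q q2 {hq hle N d d0 hx ss hk} => [|[|q]].
have kd : k = 1%N.
  case: k hk => [|[|k]] hk //; first by rewrite hk in N0.
  exfalso; move: hle; rewrite -(prednK (ltnW q2)) -/N hk; clear; nia.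
by rewrite hk kd mul1n /d dvdn_gcdl.
Qed.

Lemma pow_of_dvd (F : fieldType) m q : has_card F q -> (q.-1 %| m)%N ->
  forall x : F, x != 0 -> x ^+ m = 1.
Proof.
by move=> hq hd x nz; case/dvdnP: hd => k ->; rewrite mulnC exprM fermat // expr1n.
Qed.

Lemma tce_of_dvd (F : fieldType) m q : has_card F q -> (q.-1 %| m)%N ->
  torsion_clean_exp F m.
Proof.
move=> hq hd r; have pw := pow_of_dvd hq hd.
case: (eqVneq r 0) => [->|nz].
  exists 1, (-1); split; first by rewrite mulr1.
  split; first by exists (-1); rewrite mulrNN mulr1.
  by split; [apply: pw; rewrite oppr_eq0 oner_eq0 | rewrite addrN].
exists 0, r; split; first by rewrite mulr0.
split; first by exists r^-1; rewrite mulfV ?mulVf.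
by split; [apply: pw | rewrite add0r].
Qed.

Lemma field_tce_iff (F : fieldType) m : (0 < m)%N ->
  torsion_clean_exp F m <->
  (is_finite_type F /\ forall q, has_card F q -> (q.-1 %| m)%N).
Proof.
move=> m0; split.
  move=> H; split; first exact: tce_finite H.
  by move=> q hq; apply: tce_dvd H hq.
by case=> [[q hq] H]; apply: tce_of_dvd hq (H q hq).
Qed.

Lemma tce_pow (F : fieldType) m : (0 < m)%N -> torsion_clean_exp F m ->
  forall x : F, x != 0 -> x ^+ m = 1.
Proof.
move=> m0 H; have [q hq] := tce_finite m0 H.
exact: pow_of_dvd hq (tce_dvd m0 H hq).
Qed.

Section Prod.
Variables (I : Type) (F : I -> fieldType).
Local Notation P := (dprod (fun i => (F i : pzRingType))).

Lemma dprod_mulE (x y : P) i : (x * y) i = x i * y i.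
Proof. by []. Qed.
Lemma dprod_addE (x y : P) i : (x + y) i = x i + y i.
Proof. by []. Qed.
Lemma dprod_oneE i : (1 : P) i = 1.
Proof. by []. Qed.
Lemma dprod_expE (x : P) m i : (x ^+ m) i = x i ^+ m.
Proof. by elim: m => [|m IH]; rewrite ?expr0 // !exprS dprod_mulE IH. Qed.

Definition single (i : I) (y : F i) : P := fun j =>
  match pselect (i = j) with left h => eq_rect i (fun k => (F k : pzRingType)) y j h | right _ => 0 end.
Lemma single_id i y : single y i = y.
Proof.
rewrite /single; case: pselect => [h|//].
by have -> : h = erefl by apply: Prop_irrelevance.
Qed.

Lemma dprod_eq (x y : P) : (forall i, x i = y i) -> x = y.
Proof. exact: functional_extensionality_dep. Qed.

Lemma prod_tce m : torsion_clean_exp P m <-> forall i, torsion_clean_exp (F i) m.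
Proof.
split.
  move=> H i y; have [e [u [he [[v [uv vu]] [hm hr]]]]] := H (single y).
  exists (e i), (u i); split; first by rewrite -dprod_mulE he.
  split; first by exists (v i); rewrite -!dprod_mulE uv vu.
  by split; [rewrite -dprod_expE hm | rewrite -(single_id y) hr].
move=> H r.
have C : forall i, {p : F i * F i | p.1 * p.1 = p.1 /\ p.2 != 0 /\ p.2 ^+ m = 1 /\ r i = p.1 + p.2}.
  move=> i; apply: cid; have [e [u [he [hu [hm hr]]]]] := H i (r i).
  by exists (e, u); split => //; split => //; exact: unit_nz hu.
pose e : P := fun i => (sval (C i)).1.
pose u : P := fun i => (sval (C i)).2.
exists e, u; split.
  by apply: dprod_eq => i; rewrite dprod_mulE /e; case: (svalP (C i)).
split.
  exists (fun i => (u i)^-1); split; apply: dprod_eq => i; rewrite dprod_mulE dprod_oneE /u;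
  case: (svalP (C i)) => _ [nz _]; [exact: mulfV | exact: mulVf].
split.
  by apply: dprod_eq => i; rewrite dprod_expE dprod_oneE /u; case: (svalP (C i)) => _ [_ []].
by apply: dprod_eq => i; rewrite dprod_addE /e /u; case: (svalP (C i)) => _ [_ [_ ]].
Qed.
End Prod.

Lemma dprod_subE I (F : I -> pzRingType) (x y : dprod F) i : (x - y) i = x i - y i.
Proof. by []. Qed.

Lemma key3 (I : Type) (F : I -> fieldType) m : (0 < m)%N ->
  torsion_clean_exp (dprod (fun i => (F i : pzRingType))) m <->
  ((forall i, is_finite_type (F i)) /\
   forall x, (exists i k, has_card (F i) k /\ x = k.-1) -> (x %| m)%N).
Proof.
move=> m0; rewrite prod_tce; split.
  move=> H; split; first by move=> i; have [] := (field_tce_iff (F i) m0).1 (H i).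
  move=> x [i [k [hk ->]]]; have [_ h] := (field_tce_iff (F i) m0).1 (H i).
  exact: h.
case=> fin dv i; apply/(field_tce_iff (F i) m0); split => // q hq.
by apply: dv; exists i, q.
Qed.

Lemma part3 (I : Type) (F : I -> fieldType) (n : nat) :
      n_torsion_clean (dprod (fun i => (F i : pzRingType))) n <->
      ((forall i, is_finite_type (F i)) /\
       lcm_of_set_is (fun m => exists i k, has_card (F i) k /\ m = k.-1) n).
Proof.
split.
  case=> n0 [Hn Hmin]; have [fin dv] := (key3 F n0).1 Hn.
  split => //; split => //; split => //.
  by move=> k k0 hk; apply: (Hmin _ k0); apply/(key3 F k0).
case=> fin [n0 [dv mn]]; split => //; split; first by apply/(key3 F n0).
move=> m m0 /(key3 F m0) [_ h]; exact: mn.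
Qed.

Lemma part1 (F : fieldType) (n : nat) :
      n_torsion_clean F n <-> exists k, has_card F k /\ n = k.-1.
Proof.
split.
  case=> n0 [Hn Hmin]; have [q hq] := tce_finite n0 Hn.
  exists q; split => //; apply/eqP; rewrite eqn_leq; apply/andP; split.
    apply: Hmin; last exact: tce_of_dvd hq (dvdnn _).
    by have := card_ge2 hq; case: q {hq}=> [|[|q]].
  exact: dvdn_leq n0 (tce_dvd n0 Hn hq).
case=> k [hk ->].
have k0 : (0 < k.-1)%N by have := card_ge2 hk; case: k {hk}=> [|[|k]].
split => //; split; first exact: tce_of_dvd hk (dvdnn _).
by move=> m m0 Hm; apply: dvdn_leq m0 (tce_dvd m0 Hm hk).
Qed.

Lemma part2 (t : nat) (F : 'I_t -> finFieldType) :
      n_torsion_clean (dprod (fun i => (F i : pzRingType)))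
                      (\big[lcmn/1%N]_(i < t) #|F i|.-1).
Proof.
have hc : forall i, has_card (F i) #|F i|.
  by move=> i; exists (enum (F i)); rewrite enum_uniq cardE; split => //; split => // x; rewrite mem_enum.
apply: (proj2 (part3 (fun i => (F i : fieldType)) _)); split; first by move=> i; exists #|F i|; apply: hc.
split.
  elim/big_ind: _ => // [x y x0 y0|i _]; first by rewrite lcmn_gt0 x0.
  by have := card_ge2 (hc i); case: #|F i|.
split.
  move=> x [i [k [hk ->]]]; rewrite (card_uniq hk (hc i)).
  by apply: (biglcmn_sup i).
move=> k k0 hk; apply: dvdn_leq k0 _; apply/dvdn_biglcmP => i _.
by apply: hk; exists i, #|F i|; split => //; apply: hc.
Qed.

Lemma key4 (I : Type) (F : I -> fieldType) (R : pzRingType)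
          (f : {rmorphism R -> dprod (fun i => (F i : pzRingType))}) :
      injective f ->
      (forall i, forall y : F i, exists r : R, f r i = y) ->
      forall m, (0 < m)%N ->
      (torsion_clean_exp R m <-> torsion_clean_exp (dprod (fun i => (F i : pzRingType))) m).
Proof.
move=> finj fsurj m m0; rewrite prod_tce; split.
  move=> H i y; have [r hr] := fsurj i y.
  have [e [u [he [[v [uv vu]] [hm hre]]]]] := H r.
  exists (f e i), (f u i); split; first by rewrite -dprod_mulE -rmorphM he.
  split; first by exists (f v i); rewrite -!dprod_mulE -!rmorphM uv vu rmorph1.
  by split; [rewrite -dprod_expE -rmorphXn hm rmorph1 | rewrite -hr hre rmorphD].
move=> H r.
have pw : forall i (x : F i), x != 0 -> x ^+ m = 1 by move=> i; apply: tce_pow (H i).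
have fe : f (1 - r ^+ m) = 1 - (f r) ^+ m.
  by rewrite rmorphB rmorph1 rmorphXn.
have um : (r - (1 - r ^+ m)) ^+ m = 1.
  apply: finj; rewrite rmorphXn rmorph1 rmorphB fe; apply: dprod_eq => i.
  rewrite dprod_expE !dprod_subE dprod_oneE dprod_expE.
  case: (eqVneq (f r i) 0) => [->|nz].
    by rewrite expr0n (gtn_eqF m0) mulr0n subr0 sub0r; apply: pw; rewrite oppr_eq0 oner_eq0.
  by rewrite (pw _ (f r i) nz) subrr subr0 pw.
exists (1 - r ^+ m), (r - (1 - r ^+ m)); split.
  apply: finj; rewrite rmorphM fe; apply: dprod_eq => i.
  rewrite dprod_mulE !dprod_subE dprod_oneE dprod_expE; case: (eqVneq (f r i) 0) => [->|nz].
    by rewrite expr0n (gtn_eqF m0) mulr0n subr0 mulr1.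
  by rewrite (pw _ (f r i) nz) subrr mulr0.
split.
  exists ((r - (1 - r ^+ m)) ^+ m.-1); split.
    by rewrite -exprS prednK.
  by rewrite -exprSr prednK.
by split => //; rewrite addrC subrK.
Qed.

Lemma part4 (I : Type) (F : I -> fieldType) (R : pzRingType)
          (f : {rmorphism R -> dprod (fun i => (F i : pzRingType))}) :
      injective f ->
      (forall i, forall y : F i, exists r : R, f r i = y) ->
      forall n : nat,
        n_torsion_clean R n <->
        n_torsion_clean (dprod (fun i => (F i : pzRingType))) n.
Proof.
move=> finj fsurj n; have K := key4 finj fsurj.
split; case=> n0 [Hn Hmin]; split => //; split.
- exact: (proj1 (K n n0) Hn).
- by move=> m m0 Hm; apply: (Hmin _ m0); apply: (proj2 (K m m0) Hm).
- exact: (proj2 (K n n0) Hn).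
- by move=> m m0 Hm; apply: (Hmin _ m0); apply: (proj1 (K m m0) Hm).
Qed.

Theorem proposition2p8 :
  (* (1) *)
  (forall (F : fieldType) (n : nat),
      n_torsion_clean F n <-> exists k, has_card F k /\ n = k.-1)
  /\
  (* (2) *)
  (forall (t : nat) (F : 'I_t -> finFieldType),
      n_torsion_clean (dprod (fun i => (F i : pzRingType)))
                      (\big[lcmn/1%N]_(i < t) #|F i|.-1))
  /\
  (* (3) *)
  (forall (I : Type) (F : I -> fieldType) (n : nat),
      n_torsion_clean (dprod (fun i => (F i : pzRingType))) n <->
      ((forall i, is_finite_type (F i)) /\
       lcm_of_set_is (fun m => exists i k, has_card (F i) k /\ m = k.-1) n))
  /\
  (* (4) *)
  (forall (I : Type) (F : I -> fieldType) (R : pzRingType)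
          (f : {rmorphism R -> dprod (fun i => (F i : pzRingType))}),
      injective f ->
      (forall i, forall y : F i, exists r : R, f r i = y) ->
      forall n : nat,
        n_torsion_clean R n <->
        n_torsion_clean (dprod (fun i => (F i : pzRingType))) n).
Proof.
split; first exact: part1.
split; first exact: part2.
split; first exact: part3.
exact: part4.
Qed.
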